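(* Let $n\ge1$, let $p_1,\dots,p_n:[0,\infty)\to\mathbb C$ be continuous, and for $k=1,\dots,n$ let $$F_k(c,t)=-\sum_{m=1}^{k}e^{-mt}p_m(t)\,[z^{k-m}]\Bigl(1+\sum_{i\ge1}c_iz^i\Bigr)^{m+1},$$ where $[z^r]$ denotes the coefficient of $z^r$ (so $F_k$ is a polynomial in $c_1,\dots,c_{k-1}$; e.g. $F_1=-e^{-t}p_1$, $F_2=-2e^{-t}p_1c_1-e^{-2t}p_2$, $F_3=-e^{-t}p_1(2c_2+c_1^2)-3e^{-2t}p_2c_1-e^{-3t}p_3$). Put $H(c,\bar\psi,t)=\sum_{k=1}^n\bar\psi_kF_k(c,t)$, and let $(c(t),\bar\psi(t))$ be a $C^1$ solution of $$\dot c_k=F_k(c,t),\qquad \dot{\bar\psi}_k=-\frac{\partial H}{\partial c_k},\qquad k=1,\dots,n$$ (where $\bar\psi_k$ are treated as independent complex variables; note $\dot{\bar\psi}_n=0$). Then the functions $$L_j=\sum_{k=j}^{n}(k-j+1)\,c_{k-j}\,\bar\psi_k,\qquad j=1,\dots,n\quad(c_0:=1),$$ i.e. $L_1=\bar\psi_1+2c_1\bar\psi_2+\dots+nc_{n-1}\bar\psi_n$, $L_2=\bar\psi_2+2c_1\bar\psi_3+\dots+(n-1)c_{n-2}\bar\psi_n$, …, $L_n=\bar\psi_n$, are constant in $t$. They are linearly independent in $\bar\psi$, so the system is partially integrable.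
   Context: This system is the coefficient form of the Löwner–Kufarev equation $dw/dt=-wp(w,t)$, $w(z,0)=z$, $p(w,t)=1+\sum_k p_k(t)w^k$, with $w(z,t)=e^{-t}z(1+\sum_k c_k(t)z^k)$; positivity of $\operatorname{Re}p$ is not needed for the claim. *)

(* Defs.v *)
From Stdlib Require Import Reals Arith.
From Coquelicot Require Import Coquelicot.
Open Scope R_scope.

(* Coefficient sequence of the series 1 + sum_{i>=1} c_i z^i  (so c_0 := 1). *)
Definition ser (c : nat -> C) (i : nat) : C :=
  match i with O => RtoC 1 | S _ => c i end.

(* coef_pow c m r = [z^r] (1 + sum_{i>=1} c_i z^i)^m, computed by the
   Cauchy product: (s^(m+1))_r = sum_{i=0}^r s_i (s^m)_{r-i}. *)
Fixpoint coef_pow (c : nat -> C) (m r : nat) : C :=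
  match m with
  | O => if Nat.eqb r 0 then RtoC 1 else RtoC 0
  | S m' => sum_n_m (fun i => (ser c i * coef_pow c m' (r - i))%C) 0 r
  end.

Definition Fk (p : nat -> R -> C) (k : nat) (c : nat -> C) (t : R) : C :=
  (- sum_n_m (fun m => (RtoC (exp (- INR m * t)) * p m t
                         * coef_pow c (S m) (k - m))%C) 1 k)%C.

Definition Ham (n : nat) (p : nat -> R -> C) (c psi : nat -> C) (t : R) : C :=
  sum_n_m (fun k => (psi k * Fk p k c t)%C) 1 n.

Definition upd (c : nat -> C) (k : nat) (z : C) : nat -> C :=
  fun i => if Nat.eqb i k then z else c i.

Definition Lj (n j : nat) (c psi : nat -> C) : C :=
  sum_n_m (fun k => (RtoC (INR (k - j + 1)) * ser c (k - j) * psi k)%C) j n.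

Definition cont_on_nonneg (f : R -> C) : Prop :=
  forall t, 0 <= t ->
    filterlim f (within (fun u => 0 <= u) (locally t)) (locally (f t)).

(* Main.v *)
Require Import Defs.
From Stdlib Require Import Reals Arith Lia Lra FunctionalExtensionality.
From Coquelicot Require Import Coquelicot.
Open Scope R_scope.

Local Open Scope C_scope.
Ltac cring := match goal with |- @eq _ ?a ?b => change (@eq C a b) end; ring.

Lemma sC_ext (f g : nat -> C) a b :
  (forall k, (a <= k <= b)%nat -> f k = g k) -> sum_n_m f a b = sum_n_m g a b.
Proof. apply sum_n_m_ext_loc. Qed.

Lemma sC_plus (f g : nat -> C) a b :
  sum_n_m (fun k => f k + g k) a b = sum_n_m f a b + sum_n_m g a b.
Proof. exact (sum_n_m_plus f g a b). Qed.

Lemma sC_mult_l (x : C) (f : nat -> C) a b :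
  sum_n_m (fun k => x * f k) a b = x * sum_n_m f a b.
Proof. exact (sum_n_m_mult_l x f a b). Qed.

Lemma sC_mult_r (x : C) (f : nat -> C) a b :
  sum_n_m (fun k => f k * x) a b = sum_n_m f a b * x.
Proof. exact (sum_n_m_mult_r x f a b). Qed.

Lemma sC_empty (f : nat -> C) a b : (b < a)%nat -> sum_n_m f a b = RtoC 0.
Proof. intros. exact (sum_n_m_zero f a b H). Qed.

Lemma sC_Sm (f : nat -> C) a b : (a <= S b)%nat -> sum_n_m f a (S b) = sum_n_m f a b + f (S b).
Proof. intros. exact (sum_n_Sm f a b H). Qed.

Lemma sC_Sn (f : nat -> C) a b : (a <= b)%nat -> sum_n_m f a b = f a + sum_n_m f (S a) b.
Proof. intros. exact (sum_Sn_m f a b H). Qed.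

Lemma sC_n (f : nat -> C) a : sum_n_m f a a = f a.
Proof. exact (sum_n_n f a). Qed.

Lemma sC_chasles (f : nat -> C) a m b : (a <= S m)%nat -> (m <= b)%nat ->
  sum_n_m f a b = sum_n_m f a m + sum_n_m f (S m) b.
Proof. intros. exact (sum_n_m_Chasles f a m b H H0). Qed.

Lemma sC_zero (f : nat -> C) a b : (forall k, (a <= k <= b)%nat -> f k = RtoC 0) -> sum_n_m f a b = RtoC 0.
Proof. intros H. rewrite (sC_ext f (fun _ => RtoC 0)) by auto.
  exact (sum_n_m_const_zero a b). Qed.

Lemma sC_opp (f : nat -> C) a b : sum_n_m (fun k => - f k) a b = - sum_n_m f a b.
Proof. replace (fun k => - f k) with (fun k => (- RtoC 1) * f k) by (apply functional_extensionality; intros; ring).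
  rewrite sC_mult_l. cring. Qed.

Lemma sC_S (f : nat -> C) a b : sum_n_m (fun i => f (S i)) a b = sum_n_m f (S a) (S b).
Proof. exact (sum_n_m_S f a b). Qed.

Lemma sC_shift (f : nat -> C) d a b :
  sum_n_m f (a + d) (b + d) = sum_n_m (fun i => f (i + d)%nat) a b.
Proof.
  induction d as [|d IH] in f |- *.
  - rewrite !Nat.add_0_r. apply sC_ext. intros. f_equal. lia.
  - replace (a + S d)%nat with (S (a + d)) by lia. replace (b + S d)%nat with (S (b + d)) by lia.
    rewrite <- sC_S. rewrite IH. apply sC_ext. intros. f_equal. lia.
Qed.

Lemma sC_swap (f : nat -> nat -> C) a1 b1 a2 b2 :
  sum_n_m (fun i => sum_n_m (fun m => f i m) a2 b2) a1 b1
  = sum_n_m (fun m => sum_n_m (fun i => f i m) a1 b1) a2 b2.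
Proof.
  destruct (Nat.lt_ge_cases b1 a1) as [Hlt|Hge].
  - rewrite sC_empty by auto. symmetry. apply sC_zero. intros. apply sC_empty; auto.
  - induction b1 as [|b IH].
    + assert (a1 = 0)%nat by lia. subst. rewrite sC_n. apply sC_ext. intros. rewrite sC_n. auto.
    + destruct (Nat.eq_dec a1 (S b)) as [E|E].
      * subst. rewrite sC_n. apply sC_ext. intros. rewrite sC_n. auto.
      * rewrite sC_Sm by lia. rewrite IH by lia.
        rewrite <- sC_plus. apply sC_ext. intros. rewrite sC_Sm by lia. auto.
Qed.

Lemma sC_tri (X : nat -> nat -> C) r :
  sum_n_m (fun k => sum_n_m (fun i => X i k) 0 k) 0 r
  = sum_n_m (fun i => sum_n_m (fun k => X i k) i r) 0 r.
Proof.
  induction r as [|r IH].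
  - rewrite !sC_n. auto.
  - rewrite sC_Sm by lia. rewrite IH.
    transitivity (sum_n_m (fun i => sum_n_m (fun k => X i k) i r + X i (S r)) 0 (S r)).
    + rewrite sC_plus. rewrite (sC_Sm (fun i => sum_n_m (fun k => X i k) i r) 0 r) by lia.
      rewrite (sC_empty (fun k => X (S r) k) (S r) r) by lia. cring.
    + apply sC_ext. intros k Hk. rewrite (sC_Sm _ k r) by lia. auto.
Qed.

Lemma sC_rev (f : nat -> C) r : sum_n_m f 0 r = sum_n_m (fun i => f (r - i)%nat) 0 r.
Proof.
  induction r as [|r IH] in f |- *.
  - rewrite !sC_n. auto.
  - rewrite sC_Sn by lia. rewrite <- sC_S. rewrite IH.
    rewrite (sC_Sm _ 0 r) by lia. replace (S r - S r)%nat with 0%nat by lia.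
    rewrite Cplus_comm. f_equal. apply sC_ext. intros. f_equal. lia.
Qed.

Definition conv (f g : nat -> C) (r : nat) : C :=
  sum_n_m (fun i => f i * g (r - i)%nat) 0 r.

Lemma conv_comm f g r : conv f g r = conv g f r.
Proof.
  unfold conv. rewrite sC_rev. apply sC_ext. intros. rewrite Cmult_comm. f_equal. f_equal. lia.
Qed.

Lemma conv_assoc f g h r : conv (conv f g) h r = conv f (conv g h) r.
Proof.
  unfold conv.
  transitivity (sum_n_m (fun k => sum_n_m (fun i => f i * g (k - i)%nat * h (r - k)%nat) 0 k) 0 r).
  - apply sC_ext. intros. rewrite <- sC_mult_r. auto.
  - rewrite sC_tri. apply sC_ext. intros i Hi.
    rewrite <- sC_mult_l.
    replace i with (0 + i)%nat at 1 by lia. replace r with ((r - i) + i)%nat at 1 by lia.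
    rewrite sC_shift. apply sC_ext. intros l Hl.
    replace (l + i - i)%nat with l by lia. replace (r - (l + i))%nat with (r - i - l)%nat by lia.
    cring.
Qed.

Definition delta (r : nat) : C := if Nat.eqb r 0 then RtoC 1 else RtoC 0.

Lemma conv_delta_r f r : conv f delta r = f r.
Proof.
  unfold conv. destruct r as [|r].
  - rewrite sC_n. unfold delta. simpl. cring.
  - rewrite sC_Sm by lia. rewrite sC_zero. unfold delta. rewrite Nat.sub_diag. simpl. cring.
    intros k Hk. unfold delta. destruct (Nat.eqb_spec (S r - k) 0). lia. cring.
Qed.

Lemma conv_delta_l f r : conv delta f r = f r.
Proof. rewrite conv_comm. apply conv_delta_r. Qed.

Lemma conv_plus_r f g h r : conv f (fun i => g i + h i) r = conv f g r + conv f h r.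
Proof. unfold conv. rewrite <- sC_plus. apply sC_ext. intros. cring. Qed.

Lemma conv_scal_r f g x r : conv f (fun i => x * g i) r = x * conv f g r.
Proof. unfold conv. rewrite <- sC_mult_l. apply sC_ext. intros. cring. Qed.

Lemma conv_ext f g f' g' r : (forall i, f i = f' i) -> (forall i, g i = g' i) -> conv f g r = conv f' g' r.
Proof. intros. unfold conv. apply sC_ext. intros. rewrite H, H0. auto. Qed.

Definition Dop (f : nat -> C) (r : nat) : C := RtoC (INR r) * f r.

Lemma conv_D f g r : Dop (conv f g) r = conv (Dop f) g r + conv f (Dop g) r.
Proof.
  unfold Dop, conv. rewrite <- sC_mult_l. rewrite <- sC_plus. apply sC_ext. intros i Hi.
  rewrite (minus_INR r i) by lia. rewrite RtoC_minus. cring.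
Qed.

Lemma pw0 c r : coef_pow c 0 r = delta r.
Proof. reflexivity. Qed.

Lemma pwS c m r : coef_pow c (S m) r = conv (ser c) (coef_pow c m) r.
Proof. reflexivity. Qed.

Lemma Dpow c m r : Dop (coef_pow c (S m)) r = RtoC (INR (S m)) * conv (coef_pow c m) (Dop (ser c)) r.
Proof.
  induction m as [|m IH] in r |- *.
  - unfold Dop. rewrite pwS. rewrite (conv_ext _ _ (ser c) delta) by (intros; auto).
    rewrite conv_delta_r. rewrite (conv_ext _ _ delta (Dop (ser c))) by (intros; auto).
    rewrite conv_delta_l. unfold Dop. simpl. cring.
  - change (Dop (conv (ser c) (coef_pow c (S m))) r = RtoC (INR (S (S m))) * conv (coef_pow c (S m)) (Dop (ser c)) r).
    rewrite conv_D.
    rewrite (conv_ext (ser c) (Dop (coef_pow c (S m))) (ser c)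
       (fun i => RtoC (INR (S m)) * conv (coef_pow c m) (Dop (ser c)) i)) by (intros; auto; apply IH).
    rewrite conv_scal_r. rewrite <- conv_assoc.
    rewrite (conv_ext (conv (ser c) (coef_pow c m)) _ (coef_pow c (S m)) (Dop (ser c))) by (intros; reflexivity).
    rewrite conv_comm. rewrite !S_INR. rewrite !RtoC_plus. cring.
Qed.

Lemma KI c m R :
  RtoC (INR (R + m + 1)) * coef_pow c (S m) R
  = RtoC (INR (m + 1)) * conv (fun l => RtoC (INR (l + 1)) * ser c l) (coef_pow c m) R.
Proof.
  replace (INR (R + m + 1)) with (INR R + INR (m+1))%R by (rewrite <- plus_INR; f_equal; lia).
  rewrite RtoC_plus. rewrite Cmult_plus_distr_r.
  change (RtoC (INR R) * coef_pow c (S m) R) with (Dop (coef_pow c (S m)) R).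
  rewrite Dpow. rewrite pwS. rewrite (conv_comm (ser c) (coef_pow c m)).
  rewrite (conv_comm (fun l => RtoC (INR (l+1)) * ser c l) (coef_pow c m)).
  rewrite (conv_ext (coef_pow c m) (fun l => RtoC (INR (l + 1)) * ser c l) (coef_pow c m)
            (fun l => Dop (ser c) l + ser c l)).
  2: intros; auto. 2: intros; unfold Dop; rewrite plus_INR, RtoC_plus; simpl; cring.
  rewrite conv_plus_r. replace (INR (S m)) with (INR (m+1)) by (f_equal; lia). cring.
Qed.

Notation isdA f z l := (@is_derive C_AbsRing C_NormedModule f z l).
Notation isdB f z l := (@is_derive C_AbsRing (AbsRing_NormedModule C_AbsRing) f z l).

Lemma isdA_to (f: C -> C) x l : isdB f x l -> @is_derive C_AbsRing C_NormedModule f x l.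
Proof. intros [[H1a H1b H1c] H2]. split. split. exact H1a. exact H1b. exact H1c. intros y Hy eps. exact (H2 y Hy eps). Qed.
Lemma isdA_of (f: C -> C) x l : @is_derive C_AbsRing C_NormedModule f x l -> isdB f x l.
Proof. intros [[H1a H1b H1c] H2]. split. split. exact H1a. exact H1b. exact H1c. intros y Hy eps. exact (H2 y Hy eps). Qed.

Lemma dA_val f z l l' : isdA f z l -> l = l' -> isdA f z l'.
Proof. intros H ->. exact H. Qed.

Lemma dA_ext f g z l : (forall x, f x = g x) -> isdA f z l -> isdA g z l.
Proof. intros H. apply is_derive_ext. exact H. Qed.

Lemma dA_mult f g z a b : isdA f z a -> isdA g z b -> isdA (fun x => f x * g x) z (a * g z + f z * b).
Proof. intros Ha Hb. apply isdA_to. exact (is_derive_mult f g z a b (isdA_of _ _ _ Ha) (isdA_of _ _ _ Hb) Cmult_comm). Qed.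

Lemma dA_plus f g z a b : isdA f z a -> isdA g z b -> isdA (fun x => f x + g x) z (a + b).
Proof. intros Ha Hb. exact (is_derive_plus f g z a b Ha Hb). Qed.

Lemma dA_opp f z a : isdA f z a -> isdA (fun x => - f x) z (- a).
Proof. intros Ha. exact (is_derive_opp f z a Ha). Qed.

Lemma dA_const (c0 : C) z : isdA (fun _ => c0) z (RtoC 0).
Proof. exact (is_derive_const c0 z). Qed.

Lemma dA_id z : isdA (fun x => x) z (RtoC 1).
Proof. apply isdA_to. exact (is_derive_id z). Qed.

Lemma dA_sum (f : nat -> C -> C) (d : nat -> C) z a b :
  (forall i, (a <= i <= b)%nat -> isdA (f i) z (d i)) ->
  isdA (fun x => sum_n_m (fun i => f i x) a b) z (sum_n_m d a b).
Proof.
  intros H. destruct (Nat.lt_ge_cases b a) as [Hlt|Hge].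
  - eapply dA_val. eapply dA_ext. 2: apply (dA_const (RtoC 0)).
    intros. simpl. rewrite sC_empty by auto. auto. rewrite sC_empty by auto. auto.
  - induction b as [|b IH].
    + assert (a = 0)%nat by lia. subst. eapply dA_ext. 2: rewrite sC_n; apply H; lia.
      intros. rewrite sC_n. auto.
    + destruct (Nat.eq_dec a (S b)) as [E|E].
      * subst. eapply dA_ext. 2: rewrite sC_n; apply H; lia. intros. rewrite sC_n. auto.
      * eapply dA_ext. 2: rewrite sC_Sm by lia; apply dA_plus; [apply IH|apply H]; intros; try apply H; lia.
        intros. rewrite sC_Sm by lia. auto.
Qed.

Lemma dser c k (Hk : (1 <= k)%nat) i z0 :
  isdA (fun z => ser (upd c k z) i) z0 (if Nat.eqb i k then RtoC 1 else RtoC 0).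
Proof.
  destruct i as [|i].
  - simpl. destruct k; [lia|]. simpl. apply dA_const.
  - unfold ser, upd. destruct (Nat.eqb (S i) k). apply dA_id. apply dA_const.
Qed.

Lemma sum_delta (g : nat -> C) k r :
  sum_n_m (fun i => (if Nat.eqb i k then RtoC 1 else RtoC 0) * g i) 0 r
  = if Nat.leb k r then g k else RtoC 0.
Proof.
  induction r as [|r IH].
  - rewrite sC_n. destruct k; simpl; cring.
  - rewrite sC_Sm by lia. rewrite IH.
    destruct (Nat.leb_spec k r); destruct (Nat.leb_spec k (S r)); destruct (Nat.eqb_spec (S r) k); try lia.
    + cring.
    + subst. cring.
    + cring.
Qed.

Lemma sum_cut (h X : nat -> C) k r : (k <= r)%nat ->
  sum_n_m (fun i => h i * (if Nat.leb k (r - i) then X (r - i - k)%nat else RtoC 0)) 0 r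
  = sum_n_m (fun i => h i * X (r - k - i)%nat) 0 (r - k).
Proof.
  intros Hkr. rewrite (sC_chasles _ 0 (r - k) r) by lia.
  rewrite (sC_zero _ (S (r - k)) r).
  - rewrite Cplus_0_r. apply sC_ext. intros i Hi. destruct (Nat.leb_spec k (r - i)); [|lia].
    f_equal. f_equal. lia.
  - intros i Hi. destruct (Nat.leb_spec k (r - i)); [lia|]. cring.
Qed.

Lemma dcoef c k (Hk : (1 <= k)%nat) m : forall r z0,
  isdA (fun z => coef_pow (upd c k z) m r) z0
    (if Nat.leb k r then RtoC (INR m) * coef_pow (upd c k z0) (m - 1) (r - k) else RtoC 0).
Proof.
  induction m as [|m IH]; intros r z0.
  - eapply dA_val. eapply dA_ext. 2: apply (dA_const (coef_pow c 0 r)).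
    intros; reflexivity. destruct (Nat.leb k r); simpl; cring.
  - eapply dA_val. eapply dA_ext. 2: eapply dA_sum with
      (d := fun i => (if Nat.eqb i k then RtoC 1 else RtoC 0) * coef_pow (upd c k z0) m (r - i)
           + ser (upd c k z0) i * (if Nat.leb k (r - i) then RtoC (INR m) * coef_pow (upd c k z0) (m - 1) (r - i - k) else RtoC 0)).
    + intros; reflexivity.
    + intros i _. apply dA_mult. apply dser; auto. apply IH.
    + rewrite sC_plus. rewrite sum_delta.
      destruct (Nat.leb_spec k r) as [Hkr|Hkr].
      * rewrite (sum_cut (ser (upd c k z0)) (fun j => RtoC (INR m) * coef_pow (upd c k z0) (m - 1) j) k r Hkr).
        destruct m as [|m'].
        -- rewrite sC_zero. simpl. cring. intros. simpl. cring.
        -- replace (S m' - 1)%nat with m' by lia.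
           rewrite (sC_ext _ (fun i => RtoC (INR (S m')) * (ser (upd c k z0) i * coef_pow (upd c k z0) m' (r - k - i)))) by (intros; cring).
           rewrite sC_mult_l. change (sum_n_m _ 0 (r - k)) with (coef_pow (upd c k z0) (S m') (r - k)).
           replace (S (S m') - 1)%nat with (S m') by lia.
           rewrite (S_INR (S m')). rewrite RtoC_plus. cring.
      * rewrite sC_zero. cring. intros i Hi. destruct (Nat.leb_spec k (r - i)); [lia|]. cring.
Qed.

Definition Ecoef (p : nat -> R -> C) m t : C := RtoC (exp (- INR m * t)) * p m t.
Definition dF p k k' c t : C :=
  - sum_n_m (fun m => Ecoef p m t * (if Nat.leb k (k' - m) then RtoC (INR (S m)) * coef_pow c m (k' - m - k) else RtoC 0)) 1 k'.
Definition Dexp n p k c psi t : C := sum_n_m (fun k' => psi k' * dF p k k' c t) 1 n.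

Lemma dHam n p c psi t k (Hk : (1 <= k)%nat) z0 :
  isdA (fun z => Ham n p (upd c k z) psi t) z0 (Dexp n p k (upd c k z0) psi t).
Proof.
  unfold Ham, Dexp. apply dA_sum. intros k' _.
  eapply dA_val. apply dA_mult. apply dA_const. unfold Fk. apply dA_opp. apply dA_sum.
  intros m _. apply dA_mult. apply dA_const. apply dcoef; auto.
  unfold dF. rewrite (sC_ext _ (fun m => Ecoef p m t *
    (if Nat.leb k (k' - m) then RtoC (INR (S m)) * coef_pow (upd c k z0) m (k' - m - k) else RtoC 0))).
  cring. intros m _. replace (S m - 1)%nat with m by lia. unfold Ecoef. rewrite Cmult_0_l, Cplus_0_l. reflexivity.
Qed.
Notation isdR f t l := (@is_derive R_AbsRing C_R_NormedModule f t l).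
Lemma isdR_fst (f : R -> C) t l : isdR f t l -> is_derive (fun t => fst (f t)) t (fst l).
Proof. intros H. unfold is_derive in *.
  eapply filterdiff_ext_lin.
  apply (@filterdiff_comp R_AbsRing R_NormedModule C_R_NormedModule R_NormedModule _ _ f fst _ (fun y => fst y) H).
  apply filterdiff_linear. apply (@is_linear_fst R_AbsRing R_NormedModule R_NormedModule).
  intros y. simpl. reflexivity.
Qed.
Lemma isdR_snd (f : R -> C) t l : isdR f t l -> is_derive (fun t => snd (f t)) t (snd l).
Proof. intros H. unfold is_derive in *.
  eapply filterdiff_ext_lin.
  apply (@filterdiff_comp R_AbsRing R_NormedModule C_R_NormedModule R_NormedModule _ _ f snd _ (fun y => snd y) H).
  apply filterdiff_linear. apply (@is_linear_snd R_AbsRing R_NormedModule R_NormedModule).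
  intros y. simpl. reflexivity.
Qed.
Lemma isdR_pair (f : R -> C) t l : is_derive (fun t => fst (f t)) t (fst l) -> is_derive (fun t => snd (f t)) t (snd l) -> isdR f t l.
Proof. intros H1 H2.
  assert (A := @is_derive_scal_l R_AbsRing C_R_NormedModule (fun t => fst (f t)) t (fst l) (RtoC 1) H1).
  assert (B := @is_derive_scal_l R_AbsRing C_R_NormedModule (fun t => snd (f t)) t (snd l) (0%R,1%R) H2).
  assert (Cc := @is_derive_plus R_AbsRing C_R_NormedModule _ _ t _ _ A B).
  replace l with (plus (scal (fst l) (RtoC 1)) (scal (snd l) (0%R, 1%R)) : C).
  eapply is_derive_ext. 2: exact Cc.
  intros u. simpl. destruct (f u) as [a b]. unfold plus, scal; simpl. unfold prod_plus, prod_scal; simpl.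
  change ((Rplus (Rmult a 1) (Rmult b 0), Rplus (Rmult a 0) (Rmult b 1)) = (a, b)). apply f_equal2; ring.
  destruct l as [a b]. unfold plus, scal; simpl. unfold prod_plus, prod_scal; simpl.
  change ((Rplus (Rmult a 1) (Rmult b 0), Rplus (Rmult a 0) (Rmult b 1)) = (a, b)). apply f_equal2; ring.
Qed.
Lemma rd_val (f : R -> R) t l l' : is_derive f t l -> l = l' -> is_derive f t l'.
Proof. intros H ->; exact H. Qed.
Lemma dR_mult (f g : R -> C) t a b : isdR f t a -> isdR g t b -> isdR (fun u => (f u * g u)%C) t (a * g t + f t * b)%C.
Proof.
  intros Hf Hg. pose proof (isdR_fst _ _ _ Hf) as F1. pose proof (isdR_snd _ _ _ Hf) as F2.
  pose proof (isdR_fst _ _ _ Hg) as G1. pose proof (isdR_snd _ _ _ Hg) as G2.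
  apply isdR_pair.
  - apply (is_derive_ext (fun u => fst (f u) * fst (g u) - snd (f u) * snd (g u))%R). intros; reflexivity.
    eapply rd_val.
    apply (@is_derive_minus R_AbsRing R_NormedModule); apply Derive.is_derive_mult; eauto.
    destruct a, b, (f t), (g t); simpl. unfold minus, plus, opp; simpl. ring.
  - apply (is_derive_ext (fun u => fst (f u) * snd (g u) + snd (f u) * fst (g u))%R). intros; reflexivity.
    eapply rd_val.
    apply (@is_derive_plus R_AbsRing R_NormedModule); apply Derive.is_derive_mult; eauto.
    destruct a, b, (f t), (g t); simpl. unfold minus, plus, opp; simpl. ring.
Qed.

Lemma dR_val (f : R -> C) t l l' : isdR f t l -> l = l' -> isdR f t l'.
Proof. intros H ->; exact H. Qed.
Lemma dR_ext (f g : R -> C) t l : (forall x, f x = g x) -> isdR f t l -> isdR g t l.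
Proof. intros H. apply is_derive_ext. exact H. Qed.
Lemma dR_plus (f g : R -> C) t a b : isdR f t a -> isdR g t b -> isdR (fun x => f x + g x) t (a + b).
Proof. intros Ha Hb. exact (@is_derive_plus R_AbsRing C_R_NormedModule f g t a b Ha Hb). Qed.
Lemma dR_const (c0 : C) t : isdR (fun _ => c0) t (RtoC 0).
Proof. exact (@is_derive_const R_AbsRing C_R_NormedModule c0 t). Qed.
Lemma dR_sum (f : nat -> R -> C) (d : nat -> C) z a b :
  (forall i, (a <= i <= b)%nat -> isdR (f i) z (d i)) ->
  isdR (fun x => sum_n_m (fun i => f i x) a b) z (sum_n_m d a b).
Proof.
  intros H. destruct (Nat.lt_ge_cases b a) as [Hlt|Hge].
  - eapply dR_val. eapply dR_ext. 2: apply (dR_const (RtoC 0)).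
    intros. simpl. rewrite sC_empty by auto. auto. rewrite sC_empty by auto. auto.
  - induction b as [|b IH].
    + assert (a = 0)%nat by lia. subst. eapply dR_ext. 2: rewrite sC_n; apply H; lia.
      intros. rewrite sC_n. auto.
    + destruct (Nat.eq_dec a (S b)) as [E|E].
      * subst. eapply dR_ext. 2: rewrite sC_n; apply H; lia. intros. rewrite sC_n. auto.
      * eapply dR_ext. 2: rewrite sC_Sm by lia; apply dR_plus; [apply IH|apply H]; intros; try apply H; lia.
        intros. rewrite sC_Sm by lia. auto.
Qed.

Lemma T_claim (c : nat -> C) j m k n : (1 <= j)%nat -> (k <= n)%nat -> (1 <= m)%nat ->
  sum_n_m (fun i => RtoC (INR (i - j + 1)) * ser c (i - j) *
     (if Nat.leb i (k - m) then RtoC (INR (S m)) * coef_pow c m (k - m - i) else RtoC 0)) j n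
  = if Nat.leb (j + m) k then RtoC (INR (k - j + 1)) * coef_pow c (S m) (k - j - m) else RtoC 0.
Proof.
  intros Hj Hkn Hm.
  destruct (Nat.leb_spec (j + m) k) as [Hle|Hgt].
  - rewrite (sC_chasles _ j (k - m) n) by lia.
    rewrite (sC_zero _ (S (k - m)) n).
    2: { intros i Hi. destruct (Nat.leb_spec i (k - m)); [lia|]. cring. }
    rewrite Cplus_0_r.
    replace j with (0 + j)%nat at 1 by lia. replace (k - m)%nat with ((k - j - m) + j)%nat at 1 by lia.
    rewrite sC_shift.
    set (R0 := (k - j - m)%nat).
    rewrite (sC_ext _ (fun l => RtoC (INR (S m)) * ((RtoC (INR (l + 1)) * ser c l) * coef_pow c m (R0 - l)))).
    2: { intros l Hl. destruct (Nat.leb_spec (l + j) (k - m)); [|lia].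
         replace (l + j - j)%nat with l by lia. replace (k - m - (l + j))%nat with (R0 - l)%nat by (unfold R0; lia).
         cring. }
    rewrite sC_mult_l.
    change (sum_n_m _ 0 R0) with (conv (fun l => RtoC (INR (l + 1)) * ser c l) (coef_pow c m) R0).
    replace (INR (S m)) with (INR (m + 1)) by (f_equal; lia).
    rewrite <- KI. f_equal. f_equal. f_equal. unfold R0. lia.
  - apply sC_zero. intros i Hi. destruct (Nat.leb_spec i (k - m)); [lia|]. cring.
Qed.

Lemma sC_pull (f g : nat -> C) x a b :
  sum_n_m (fun m => f m * (x * g m)) a b = x * sum_n_m (fun m => f m * g m) a b.
Proof. rewrite <- sC_mult_l. apply sC_ext. intros. cring. Qed.

Lemma PK p (c : nat -> C) t j k n : (1 <= j)%nat -> (k <= n)%nat ->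
  RtoC (INR (k - j + 1)) * Fk p (k - j) c t
  = sum_n_m (fun i => (RtoC (INR (i - j + 1)) * ser c (i - j)) * dF p i k c t) j n.
Proof.
  intros Hj Hkn. unfold dF.
  rewrite (sC_ext _ (fun i => - sum_n_m (fun m => Ecoef p m t *
      (RtoC (INR (i - j + 1)) * ser c (i - j) *
       (if Nat.leb i (k - m) then RtoC (INR (S m)) * coef_pow c m (k - m - i) else RtoC 0))) 1 k)).
  2: { intros i _. rewrite sC_pull. cring. }
  rewrite sC_opp. rewrite sC_swap.
  rewrite (sC_ext _ (fun m => Ecoef p m t *
      (if Nat.leb (j + m) k then RtoC (INR (k - j + 1)) * coef_pow c (S m) (k - j - m) else RtoC 0))).
  2: { intros m Hm. rewrite sC_mult_l. rewrite T_claim; auto. lia. }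
  rewrite (sC_chasles _ 1 (k - j) k) by lia.
  rewrite (sC_zero _ (S (k - j)) k).
  2: { intros m Hm. destruct (Nat.leb_spec (j + m) k); [lia|]. cring. }
  unfold Fk. rewrite Cplus_0_r.
  rewrite (sC_ext (fun m => Ecoef p m t * (if Nat.leb (j + m) k then RtoC (INR (k - j + 1)) * coef_pow c (S m) (k - j - m) else RtoC 0)) (fun m => RtoC (INR (k - j + 1)) * (RtoC (exp (- INR m * t)) * p m t * coef_pow c (S m) (k - j - m)))).
  rewrite sC_mult_l. cring. intros m Hm. destruct (Nat.leb_spec (j + m) k); [|lia]. unfold Ecoef.
  cring.
Qed.

Lemma Fk0 p c t : Fk p 0 c t = RtoC 0.
Proof. unfold Fk. rewrite sC_empty by lia. cring. Qed.

Lemma MA p c ps t j n : (1 <= j)%nat -> (j <= n)%nat ->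
  sum_n_m (fun k => RtoC (INR (k - j + 1)) * Fk p (k - j) c t * ps k) j n
  = sum_n_m (fun k => RtoC (INR (k - j + 1)) * ser c (k - j) * Dexp n p k c ps t) j n.
Proof.
  intros Hj Hjn. unfold Dexp.
  rewrite (sC_ext (fun k => RtoC (INR (k - j + 1)) * ser c (k - j) * sum_n_m (fun k' => ps k' * dF p k k' c t) 1 n)
     (fun k => sum_n_m (fun k' => ps k' * (RtoC (INR (k - j + 1)) * ser c (k - j) * dF p k k' c t)) 1 n)).
  2: { intros. rewrite <- sC_mult_l. apply sC_ext. intros. cring. }
  rewrite sC_swap.
  rewrite (sC_chasles _ 1 (j - 1) n) by lia.
  replace (S (j - 1)) with j by lia.
  rewrite (sC_zero _ 1 (j - 1)).
  2: { intros k' Hk'. rewrite sC_mult_l. rewrite <- PK by lia. replace (k' - j)%nat with 0%nat by lia. rewrite Fk0. cring. }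
  rewrite Cplus_0_l. apply sC_ext. intros k Hk. rewrite sC_mult_l. rewrite <- PK by lia. cring.
Qed.
Local Close Scope C_scope.
Section S.
Context {F : (R -> Prop) -> Prop} {FF : Filter F}.
Lemma cC_fst (f : R -> C) l : filterlim f F (locally l) -> filterlim (fun u => fst (f u)) F (locally (fst l)).
Proof. intros H. apply filterlim_locally. intros eps. generalize (proj1 (filterlim_locally f l) H eps).
  apply filter_imp. intros x [H1 H2]. exact H1. Qed.
Lemma cC_snd (f : R -> C) l : filterlim f F (locally l) -> filterlim (fun u => snd (f u)) F (locally (snd l)).
Proof. intros H. apply filterlim_locally. intros eps. generalize (proj1 (filterlim_locally f l) H eps).
  apply filter_imp. intros x [H1 H2]. exact H2. Qed.
Lemma cC_pair (f : R -> C) l : filterlim (fun u => fst (f u)) F (locally (fst l)) ->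
  filterlim (fun u => snd (f u)) F (locally (snd l)) -> filterlim f F (locally l).
Proof. intros H1 H2. apply filterlim_locally. intros eps.
  generalize (filter_and _ _ (proj1 (filterlim_locally _ _) H1 eps) (proj1 (filterlim_locally _ _) H2 eps)).
  apply filter_imp. intros x [A B]. split; auto. Qed.
Lemma cR_mult (f g : R -> R) a b : filterlim f F (locally a) -> filterlim g F (locally b) ->
  filterlim (fun u => f u * g u) F (locally (a * b)).
Proof. intros Hf Hg. eapply filterlim_comp_2; eauto. apply (@filterlim_mult R_AbsRing a b). Qed.
Lemma cR_plus (f g : R -> R) a b : filterlim f F (locally a) -> filterlim g F (locally b) ->
  filterlim (fun u => f u + g u) F (locally (a + b)).
Proof. intros Hf Hg. eapply filterlim_comp_2; eauto. apply (@filterlim_plus R_AbsRing R_NormedModule a b). Qed.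
Lemma cR_opp (f : R -> R) a : filterlim f F (locally a) -> filterlim (fun u => - f u) F (locally (- a)).
Proof. intros Hf. eapply filterlim_comp; eauto. apply (@filterlim_opp R_AbsRing R_NormedModule a). Qed.
Lemma cC_mult (f g : R -> C) a b : filterlim f F (locally a) -> filterlim g F (locally b) ->
  filterlim (fun u => (f u * g u)%C) F (locally (a * b)%C).
Proof. intros Hf Hg. apply cC_pair; simpl.
  - apply cR_plus. apply cR_mult; [apply cC_fst|apply cC_fst]; auto. apply cR_opp. apply cR_mult; [apply cC_snd|apply cC_snd]; auto.
  - apply cR_plus; apply cR_mult; first [apply cC_fst | apply cC_snd]; auto.
Qed.
Lemma cC_plus (f g : R -> C) a b : filterlim f F (locally a) -> filterlim g F (locally b) ->
  filterlim (fun u => (f u + g u)%C) F (locally (a + b)%C).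
Proof. intros Hf Hg. apply cC_pair; simpl.
  - apply cR_plus; apply cC_fst; auto.
  - apply cR_plus; apply cC_snd; auto.
Qed.
Lemma cC_const (a : C) : filterlim (fun _ => a) F (locally a).
Proof. apply filterlim_const. Qed.
Lemma cC_sum (f : nat -> R -> C) (l : nat -> C) a b :
  (forall i, (a <= i <= b)%nat -> filterlim (f i) F (locally (l i))) ->
  filterlim (fun u => sum_n_m (fun i => f i u) a b) F (locally (sum_n_m l a b)).
Proof.
  intros H. destruct (Nat.lt_ge_cases b a) as [Hlt|Hge].
  - rewrite (sum_n_m_zero l) by auto. eapply filterlim_ext. 2: apply cC_const.
    intros. simpl. rewrite sum_n_m_zero by auto. auto.
  - induction b as [|b IH].
    + assert (a = 0)%nat by lia. subst. rewrite sum_n_n. eapply filterlim_ext. 2: apply H; lia.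
      intros. simpl. rewrite sum_n_n. auto.
    + destruct (Nat.eq_dec a (S b)) as [E|E].
      * subst. rewrite sum_n_n. eapply filterlim_ext. 2: apply H; lia. intros. simpl. rewrite sum_n_n. auto.
      * rewrite sum_n_Sm by lia. eapply filterlim_ext. 2: apply cC_plus; [apply IH|apply H]; intros; try apply H; lia.
        intros. simpl. rewrite sum_n_Sm by lia. auto.
Qed.
End S.
Local Open Scope C_scope.

Local Close Scope C_scope.
Lemma const_R (h : R -> R) T : 0 <= T -> (forall u, 0 < u -> is_derive h u 0) ->
  filterlim h (within (fun u => 0 <= u) (locally 0)) (locally (h 0)) -> h T = h 0.
Proof.
  intros HT Hd Hc.
  assert (A : forall a, 0 < a <= T -> h T = h a).
  { intros a Ha. destruct (MVT_gen h a T (fun _ => 0)) as [x [_ Hx]].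
    - intros x [H1 H2]. apply Hd. unfold Rmin in H1. destruct (Rle_dec a T); lra.
    - intros x [H1 H2]. apply continuity_pt_filterlim. apply (ex_derive_continuous h x).
      exists 0. apply Hd. assert (0 < Rmin a T) by (apply Rmin_glb_lt; lra). lra.
    - lra. }
  destruct (Req_dec T 0) as [->|HT0]; auto.
  destruct (Req_dec (h T) (h 0)) as [E|E]; auto. exfalso.
  assert (Hp : 0 < Rabs (h T - h 0)) by (apply Rabs_pos_lt; lra).
  destruct (proj1 (filterlim_locally h (h 0)) Hc (mkposreal _ Hp)) as [d Hd'].
  set (y := Rmin (d / 2) T).
  assert (Hy : 0 < y) by (apply Rmin_glb_lt; [destruct d; simpl; lra|lra]).
  assert (Hyd : y <= d / 2) by apply Rmin_l. assert (HyT : y <= T) by apply Rmin_r.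
  specialize (Hd' y). 
  assert (B : ball 0 d y). { change (Rabs (y - 0) < d). rewrite Rminus_0_r, Rabs_pos_eq by lra. destruct d; simpl in *; lra. }
  specialize (Hd' B). simpl in Hd'. specialize (Hd' ltac:(lra)).
  change (Rabs (h y - h 0) < Rabs (h T - h 0)) in Hd'. rewrite <- (A y) in Hd' by lra. lra.
Qed.

Local Open Scope C_scope.

Lemma upd_self (c : nat -> C) k : upd c k (c k) = c.
Proof. apply functional_extensionality. intros i. unfold upd. destruct (Nat.eqb_spec i k); subst; auto. Qed.

Lemma main_aux (n : nat) (p : nat -> R -> C)
  (c psi : nat -> R -> C) :
  (1 <= n)%nat ->
  (forall m, (1 <= m <= n)%nat -> cont_on_nonneg (p m)) ->
  (forall k, (1 <= k <= n)%nat -> cont_on_nonneg (c k)) ->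
  (forall k, (1 <= k <= n)%nat -> cont_on_nonneg (psi k)) ->
  (forall k t, (1 <= k <= n)%nat -> 0 < t ->
     is_derive (V := C_R_NormedModule) (c k) t
       (Fk p k (fun i => c i t) t)) ->
  (forall k t, (1 <= k <= n)%nat -> 0 < t ->
     exists D : C,
       is_derive (K := C_AbsRing) (V := C_NormedModule)
         (fun z => Ham n p (upd (fun i => c i t) k z) (fun i => psi i t) t)
         (c k t) D
       /\ is_derive (V := C_R_NormedModule) (psi k) t (- D)%C) ->
  forall j t, (1 <= j <= n)%nat -> 0 <= t ->
    Lj n j (fun i => c i t) (fun i => psi i t)
    = Lj n j (fun i => c i 0) (fun i => psi i 0).
Proof.
  intros Hn Hp Hc Hpsi Hdc Hdpsi j T Hj HT.
  set (Lf := fun t => Lj n j (fun i => c i t) (fun i => psi i t)).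
  change (Lf T = Lf 0%R).
  assert (Hder : forall u, (0 < u)%R -> isdR Lf u (RtoC 0)).
  { intros u Hu.
    assert (Hps : forall k, (1 <= k <= n)%nat ->
       isdR (psi k) u (- Dexp n p k (fun i => c i u) (fun i => psi i u) u)).
    { intros k Hk. destruct (Hdpsi k u Hk Hu) as [D [HD1 HD2]].
      assert (HD3 := dHam n p (fun i => c i u) (fun i => psi i u) u k (proj1 Hk) (c k u)).
      replace (upd (fun i => c i u) k (c k u)) with (fun i => c i u) in HD3
        by (symmetry; apply (upd_self (fun i => c i u) k)).
      apply is_C_derive_unique in HD1. apply is_C_derive_unique in HD3.
      rewrite HD1 in HD3. rewrite <- HD3. exact HD2. }
    assert (Hser : forall k, (j <= k <= n)%nat ->
       isdR (fun t => ser (fun i => c i t) (k - j)) u (Fk p (k - j) (fun i => c i u) u)).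
    { intros k Hk. destruct (k - j)%nat as [|q] eqn:E.
      - rewrite Fk0. simpl. apply dR_const.
      - simpl. apply Hdc; auto. lia. }
    unfold Lf, Lj. eapply dR_val. apply dR_sum. intros k Hk.
    apply dR_mult. apply dR_mult. apply dR_const. apply Hser; auto. apply Hps; lia.
    rewrite (sC_ext _ (fun k => RtoC (INR (k - j + 1)) * Fk p (k - j) (fun i => c i u) u * psi k u
        + - (RtoC (INR (k - j + 1)) * ser (fun i => c i u) (k - j) * Dexp n p k (fun i => c i u) (fun i => psi i u) u))).
    2: { intros. cring. }
    rewrite sC_plus. rewrite sC_opp. rewrite MA by lia. cring. }
  assert (Hcont : filterlim Lf (within (fun u => (0 <= u)%R) (locally 0%R)) (locally (Lf 0%R))).
  { unfold Lf, Lj. apply cC_sum. intros k Hk. apply cC_mult. apply cC_mult. apply cC_const.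
    - destruct (k - j)%nat as [|q] eqn:E.
      + simpl. apply cC_const.
      + simpl. apply Hc. lia. lra.
    - apply Hpsi. lia. lra. }
  assert (E1 : fst (Lf T) = fst (Lf 0%R)).
  { apply (const_R (fun t => fst (Lf t)) T HT).
    - intros u Hu. apply (isdR_fst Lf u (RtoC 0)). auto.
    - apply (cC_fst Lf). exact Hcont. }
  assert (E2 : snd (Lf T) = snd (Lf 0%R)).
  { apply (const_R (fun t => snd (Lf t)) T HT).
    - intros u Hu. apply (isdR_snd Lf u (RtoC 0)). auto.
    - apply (cC_snd Lf). exact Hcont. }
  destruct (Lf T), (Lf 0%R). simpl in *. subst. reflexivity.
Qed.

Local Close Scope C_scope.

Theorem mainTheorem5 (n : nat) (p : nat -> R -> C)
  (c psi : nat -> R -> C) :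
  (1 <= n)%nat ->
  (* p_1, ..., p_n continuous on [0, +oo) *)
  (forall m, (1 <= m <= n)%nat -> cont_on_nonneg (p m)) ->
  (* the solution is continuous on [0, +oo) ... *)
  (forall k, (1 <= k <= n)%nat -> cont_on_nonneg (c k)) ->
  (forall k, (1 <= k <= n)%nat -> cont_on_nonneg (psi k)) ->
  (* ... and satisfies dc_k/dt = F_k(c,t) for t > 0 ... *)
  (forall k t, (1 <= k <= n)%nat -> 0 < t ->
     is_derive (V := C_R_NormedModule) (c k) t
       (Fk p k (fun i => c i t) t)) ->
  (* ... and dpsi_k/dt = - dH/dc_k (complex partial derivative in c_k) *)
  (forall k t, (1 <= k <= n)%nat -> 0 < t ->
     exists D : C,
       is_derive (K := C_AbsRing) (V := C_NormedModule)
         (fun z => Ham n p (upd (fun i => c i t) k z) (fun i => psi i t) t)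
         (c k t) D
       /\ is_derive (V := C_R_NormedModule) (psi k) t (- D)%C) ->
  forall j t, (1 <= j <= n)%nat -> 0 <= t ->
    Lj n j (fun i => c i t) (fun i => psi i t)
    = Lj n j (fun i => c i 0) (fun i => psi i 0).
Proof. exact (main_aux n p c psi). Qed.
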